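(* Let $n\ge1$, $\varepsilon\in D$, $s\in D^n$, with the recursive construction below, and suppose $\Delta_n\neq0$. Then (i) $\big(\mu^{(n)}\big)^{*}=\Delta'_n\,\big(\mu^{(n-1)}\big)^{*}-\Delta_n\,x^{p(n-1)}\big(\mu^{((n-1)')}\big)^{*}$; (ii) $p(n)=p(n-1)+1$ if $e_{n-1}\le0$, and $p(n)=1$ if $e_{n-1}>0$.
   Context: Let $D$ be a commutative integral domain with $1\neq 0$. The reciprocal of $0$ is $0$, and for nonzero $f\in D[x]$ its reciprocal is $f^{*}(x)=x^{\deg f}f(x^{-1})$. For $s=(s_1,\dots,s_n)\in D^n$ put $\underline{s}=s_1x^{-1}+\cdots+s_nx^{-n}\in D[x,x^{-1}]$; for a Laurent polynomial $F$, $F_k$ is the coefficient of $x^k$; $s^{(i)}=(s_1,\dots,s_i)$. For nonzero $f\in D[x]$ and $t\in D^m$, $\Delta(f,t)=(f\cdot\underline{t})_{\deg f-m}$. Recursive construction (relative to a fixed $\varepsilon\in D$): put $\mu^{(-1)}=\varepsilon$, $\mu^{(0)}=1$, $\Delta_0=1$, $0'=-1$, and for $j\ge 0$ let $e_j=j+1-2\deg\mu^{(j)}$ (so $e_0=1$). For $j=1,\dots,n$ successively define: $\Delta_j=\Delta(\mu^{(j-1)},s^{(j)})$; the index $j'=(j-1)'$ if $\Delta_j=0$ or $e_{j-1}\le 0$, and $j'=j-1$ if $\Delta_j\neq0$ and $e_{j-1}>0$; $\Delta'_j=\Delta_{(j-1)'+1}$; and $\mu^{(j)}=\mu^{(j-1)}$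 if $\Delta_j=0$, otherwise $\mu^{(j)}=\Delta'_j\,x^{\max\{e_{j-1},0\}}\mu^{(j-1)}-\Delta_j\,x^{\max\{-e_{j-1},0\}}\mu^{((j-1)')}$. Define $p(0)=1$ and $p(j)=j-j'$ for $1\le j\le n$. *)

(* Defs.v *)
From HB Require Import structures.
From mathcomp Require Import all_boot all_order all_algebra.
Set Implicit Arguments. Unset Strict Implicit. Unset Printing Implicit Defensive.
Import Order.TTheory GRing.Theory Num.Theory.
Local Open Scope ring_scope.

Section BMA.
Variable D : idomainType.

(* degree of a polynomial (only used for nonzero polynomials) *)
Definition pdeg (f : {poly D}) : nat := (size f).-1.

(* reciprocal: 0* = 0, f* = x^{deg f} f(1/x), i.e. coefficient i of f* is f_{deg f - i} *)
Definition recip (f : {poly D}) : {poly D} :=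
  \poly_(i < size f) f`_((size f).-1 - i).

Definition coefZ (f : {poly D}) (k : int) : D :=
  match k with Posz k' => f`_k' | Negz _ => 0 end.

(* Delta(f,t) = (f * (t_1 x^-1 + ... + t_m x^-m))_{deg f - m}
   = sum_{i=1}^m f_{deg f - m + i} t_i  (literal unfolding of the Laurent product) *)
Definition DeltaFT (f : {poly D}) (t : seq D) : D :=
  let m := size t in
  \sum_(i < m) coefZ f ((pdeg f)%:Z - m%:Z + (i.+1)%:Z) * t`_i.

(* history of the recursive construction up to step k:
   M j = mu^(j) (j >= 0), Dl j = Delta_j (j >= 0), J j = j' (j >= 0) *)
Definition muZ (eps : D) (M : nat -> {poly D}) (j : int) : {poly D} :=
  match j with Posz k => M k | Negz _ => eps%:P end.
Definition DlZ (Dl : nat -> D) (j : int) : D :=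
  match j with Posz k => Dl k | Negz _ => 0 end.
Definition eOf (j : nat) (f : {poly D}) : int := (j.+1)%:Z - 2%:Z * (pdeg f)%:Z.

Fixpoint hist (eps : D) (s : seq D) (k : nat)
  : (nat -> {poly D}) * (nat -> D) * (nat -> int) :=
  match k with
  | 0 => (fun _ => 1, fun _ => 1, fun _ => (-1)%R)
  | k'.+1 =>
    let: (M, Dl, J) := hist eps s k' in
    let j := k'.+1 in
    let dj := DeltaFT (M k') (take j s) in
    let e := eOf k' (M k') in
    let jp := if (dj == 0) || (e <= 0) then J k' else k'%:Z in
    let dpr := DlZ Dl (J k' + 1) in
    let mj := if dj == 0 then M k'
              else dpr *: ('X^(absz (Num.max e 0)) * M k')
                   - dj *: ('X^(absz (Num.max (- e) 0)) * muZ eps M (J k')) in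
    (fun i => if i == j then mj else M i,
     fun i => if i == j then dj else Dl i,
     fun i => if i == j then jp else J i)
  end.

Definition mu (eps : D) (s : seq D) (j : int) : {poly D} :=
  match j with Posz k => (hist eps s k).1.1 k | Negz _ => eps%:P end.
Definition Delta (eps : D) (s : seq D) (j : nat) : D := (hist eps s j).1.2 j.
Definition jp (eps : D) (s : seq D) (j : nat) : int := (hist eps s j).2 j.
Definition e (eps : D) (s : seq D) (j : nat) : int := eOf j (mu eps s j%:Z).
Definition Deltap (eps : D) (s : seq D) (j : nat) : D :=
  DlZ (Delta eps s) (jp eps s j.-1 + 1).
(* p(0) = 1, p(j) = j - j' (a positive integer, since j' <= j-1) *)
Definition p (eps : D) (s : seq D) (j : nat) : nat :=
  if j == 0%N then 1%N else absz (j%:Z - jp eps s j).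

End BMA.

(* Main.v *)
Require Import Defs.
From HB Require Import structures.
From mathcomp Require Import all_boot all_order all_algebra.
From Stdlib Require Import Lia.
Import Order.TTheory GRing.Theory Num.Theory.
Local Open Scope ring_scope.

Ltac nlia := rewrite -?addnn; repeat match goal with
 | H : is_true (leq _ _) |- _ => move/ssrnat.leP: H => H
 | H : (leq _ _) = true |- _ => move/ssrnat.leP: H => H
 | H : is_true (~~ leq _ _) |- _ => rewrite -ltnNge in H
 | H : (leq _ _) = false |- _ => move/negbT: H => H
 | H : context [ _.*2 ] |- _ => rewrite -addnn in H
 | H : context [ addn ] |- _ => rewrite -plusE in H
 | H : context [ subn ] |- _ => rewrite -minusE in H
 | H : context [ muln ] |- _ => rewrite -multE in H
 end; rewrite -?ltnNge -?plusE -?minusE -?multE;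
 first [apply/ssrnat.leP; lia | lia].

Section Poly.
Variable D : idomainType.

Definition revN (N : nat) (f : {poly D}) := \poly_(i < N.+1) f`_(N - i).

Lemma recip_revN (f : {poly D}) : recip f = revN (pdeg f) f.
Proof.
apply/polyP => i; rewrite /recip /revN !coef_poly /pdeg.
case sz: (size f) => [|m] /=; last by [].
rewrite nth_default ?sz //; by case: ifP.
Qed.

Lemma revN_lin N (a b : D) (f g : {poly D}) : revN N (a *: f - b *: g) = a *: revN N f - b *: revN N g.
Proof.
apply/polyP => i; rewrite coefB !coefZ !coef_poly coefB !coefZ.
by case: ifP => _; rewrite ?mulr0 ?subr0.
Qed.

Lemma revN_Xn N a (f : {poly D}) : (a <= N)%N -> (size f <= (N - a).+1)%N ->
  revN N ('X^a * f) = revN (N - a) f.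
Proof.
move=> aN sf; apply/polyP => i; rewrite !coef_poly coefXnM.
case: (ltnP i (N - a).+1) => h1.
  have -> : (i < N.+1)%N by nlia.
  have -> : (N - i < a)%N = false by apply/negbTE; nlia.
  congr (f`_ _); nlia.
case: ifP => // h2; case: ifP => // h3; exfalso; nlia.
Qed.

Lemma revN_shift N t (f : {poly D}) : (size f <= N.+1)%N -> revN (N + t) f = 'X^t * revN N f.
Proof.
move=> sf; apply/polyP => i; rewrite !coef_poly coefXnM coef_poly.
case: (ltnP i t) => h1.
  case: ifP => // _; rewrite nth_default //; apply: leq_trans sf _; nlia.
have -> : (i - t < N.+1)%N = (i < (N + t).+1)%N.
  by apply/idP/idP => h; nlia.
case: ifP => // _; congr (f`_ _); nlia.
Qed.

Lemma size_pdeg (f : {poly D}) : (size f <= (pdeg f).+1)%N.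
Proof. by rewrite /pdeg; case: (size f). Qed.

Lemma gen (c d : D) (F G : {poly D}) a b t : c != 0 -> F != 0 -> (0 < t)%N ->
  (b <= a + pdeg F)%N -> (pdeg G + t = a + pdeg F - b)%N ->
  let P := c *: ('X^a * F) - d *: ('X^b * G) in
  P != 0 /\ pdeg P = (a + pdeg F)%N /\
  recip P = c *: recip F - d *: ('X^t * recip G).
Proof.
move=> c0 F0 t0 bN eG P.
have sF : size F = (pdeg F).+1 by rewrite /pdeg prednK // size_poly_gt0.
have hG := size_pdeg G.
have sA : size (c *: ('X^a * F)) = (a + pdeg F).+1.
  rewrite size_scale // size_monicM ?monicXn // ?size_polyXn ?sF //; nlia.
have sB : (size (- (d *: ('X^b * G))) < (a + pdeg F).+1)%N.
  rewrite size_polyN; apply: leq_ltn_trans (size_scale_leq _ _) _.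
  apply: leq_ltn_trans (size_polyMleq _ _) _; rewrite size_polyXn addSn /=.
  move: hG eG bN t0; set x := pdeg G; set y := pdeg F; set z := size G.
  move=> *; nlia.
have sP : size P = (a + pdeg F).+1 by rewrite /P size_polyDl sA.
have dP : pdeg P = (a + pdeg F)%N by rewrite /pdeg sP.
split; first by rewrite -size_poly_gt0 sP.
split=> //.
rewrite recip_revN dP revN_lin.
rewrite (revN_Xn (a + pdeg F)%N a F); last 2 first.
- nlia.
- rewrite sF; nlia.
rewrite (revN_Xn (a + pdeg F)%N b G); last 2 first.
- by [].
- rewrite -eG; move: hG; set x := pdeg G; set z := size G; move=> *; nlia.
have -> : (a + pdeg F - a = pdeg F)%N by nlia.
by rewrite -eG revN_shift ?size_pdeg // -!recip_revN.
Qed.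
End Poly.

Section Hist.
Variable D : idomainType.
Variable eps : D.
Variable s : seq D.

Definition Mg k := (hist eps s k).1.1 k.
Definition Dg k := (hist eps s k).1.2 k.
Definition Jg k := (hist eps s k).2 k.

Lemma hist_step k : hist eps s k.+1 =
  (fun i => if i == k.+1 then Mg k.+1 else (hist eps s k).1.1 i,
   fun i => if i == k.+1 then Dg k.+1 else (hist eps s k).1.2 i,
   fun i => if i == k.+1 then Jg k.+1 else (hist eps s k).2 i).
Proof.
rewrite /Mg /Dg /Jg /=; case: (hist eps s k) => [[M Dl] J] /=.
by rewrite !eqxx.
Qed.

Lemma stab k i : (i <= k)%N ->
  [/\ (hist eps s k).1.1 i = Mg i, (hist eps s k).1.2 i = Dg i & (hist eps s k).2 i = Jg i].
Proof.
elim: k i => [|k IH] i.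
  by rewrite leqn0 => /eqP ->.
rewrite hist_step /=; case: eqVneq => [->|ne] // h.
by apply: IH; rewrite -ltnS ltn_neqAle ne h.
Qed.

Lemma Dg_S k : Dg k.+1 = DeltaFT (Mg k) (take k.+1 s).
Proof.
have [h1 _ _] := stab _ _ (leqnn k); rewrite -h1.
rewrite /Dg /=; case: (hist eps s k) => [[M Dl] J] /=; by rewrite eqxx.
Qed.

Lemma Jg_S k : Jg k.+1 = if (Dg k.+1 == 0) || (eOf k (Mg k) <= 0) then Jg k else k%:Z.
Proof.
have [h1 _ h3] := stab _ _ (leqnn k); rewrite Dg_S -h1 -h3.
rewrite /Jg /=; case: (hist eps s k) => [[M Dl] J] /=; by rewrite eqxx.
Qed.

Lemma Mg_S0 k : Mg k.+1 =
  if DeltaFT ((hist eps s k).1.1 k) (take k.+1 s) == 0 then (hist eps s k).1.1 k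
  else DlZ (hist eps s k).1.2 ((hist eps s k).2 k + 1) *:
        ('X^(absz (Num.max (eOf k ((hist eps s k).1.1 k)) 0)) * (hist eps s k).1.1 k)
       - DeltaFT ((hist eps s k).1.1 k) (take k.+1 s) *:
        ('X^(absz (Num.max (- eOf k ((hist eps s k).1.1 k)) 0)) *
           muZ eps (hist eps s k).1.1 ((hist eps s k).2 k)).
Proof.
rewrite /Mg /=; case: (hist eps s k) => [[M Dl] J] /=; by rewrite eqxx.
Qed.

Definition jok k := Jg k = -1 \/ exists2 a, Jg k = Posz a & (a < k)%N.

Lemma Mg_S k : jok k -> Mg k.+1 =
  if Dg k.+1 == 0 then Mg k
  else DlZ Dg (Jg k + 1) *: ('X^(absz (Num.max (eOf k (Mg k)) 0)) * Mg k)
       - Dg k.+1 *: ('X^(absz (Num.max (- eOf k (Mg k)) 0)) * muZ eps Mg (Jg k)).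
Proof.
move=> hj; have [h1 _ h3] := stab _ _ (leqnn k).
rewrite Mg_S0 h1 h3 Dg_S; case: ifP => // _.
case: hj => [e1|[a e1 ak]]; rewrite e1 /=.
  by have [_ h _] := stab _ _ (leq0n k); rewrite h.
rewrite addn1.
have [h4 _ _] := stab _ _ (ltnW ak); have [_ h5 _] := stab _ _ ak.
by rewrite h4 h5.
Qed.

Lemma eOfE k (f : {poly D}) : eOf k f = (k.+1)%:Z - ((pdeg f).*2)%:Z.
Proof. by rewrite /eOf -PoszM mul2n. Qed.

Lemma maxE1 m n : absz (Num.max (m%:Z - n%:Z) 0) = (m - n)%N.
Proof.
case: (leqP n m) => h.
  by rewrite subzn // max_l // lez_nat.
rewrite max_r; last by rewrite subr_le0 lez_nat ltnW.
by apply/esym/eqP; rewrite subn_eq0 ltnW.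
Qed.

Lemma maxE2 m n : absz (Num.max (- (m%:Z - n%:Z)) 0) = (n - m)%N.
Proof. by rewrite opprB maxE1. Qed.

Lemma le0E m n : (m%:Z - n%:Z <= 0) = (m <= n)%N.
Proof. by rewrite subr_le0 lez_nat. Qed.

Definition invB k := Mg k != 0 /\
  ((Jg k = -1 /\ pdeg (Mg k) = 0%N) \/
   exists a, [/\ Jg k = Posz a, (a < k)%N, (pdeg (Mg k) + pdeg (Mg a) = a.+1)%N
                 & Dg a.+1 != 0]).

Lemma invB0 : invB 0.
Proof.
split; first by rewrite /Mg /= oner_neq0.
by left; split => //; rewrite /Mg /= /pdeg size_poly1.
Qed.

Lemma pdegC (c : D) : pdeg c%:P = 0%N.
Proof. by rewrite /pdeg size_polyC; case: (c != 0). Qed.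

Lemma pE k : p eps s k = if k == 0%N then 1%N else absz (k%:Z - Jg k).
Proof. by []. Qed.

Lemma facts k : invB k -> let L := pdeg (Mg k) in
 [/\ DlZ Dg (Jg k + 1) != 0, (0 < p eps s k)%N, ((L.*2 - k.+1) <= (k.+1 - L.*2) + L)%N,
   (pdeg (muZ eps Mg (Jg k)) + p eps s k = (k.+1 - L.*2) + L - (L.*2 - k.+1))%N
 & jok k].
Proof.
move=> [M0 [[e1 e2]|[a [e1 ak e2 e3]]]] L.
  have pk : p eps s k = k.+1.
    rewrite pE e1; case: eqP => [->//|_].
    by rewrite opprK -PoszD addn1.
  rewrite e1 addNr pk /L e2 pdegC; split => //.
  - by rewrite /Dg /= oner_neq0.
  - by rewrite subn0 addn0.
  - by left.
have pk : p eps s k = (k - a)%N.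
  rewrite pE e1; case: eqP => [k0|_]; first by move: ak; rewrite k0.
  by rewrite subzn // ltnW.
rewrite e1.
have -> : Posz a + 1 = Posz a.+1 by rewrite -addn1 PoszD.
rewrite pk /=; split => //.
- nlia.
- move: e2 ak; rewrite /L; set x := pdeg (Mg k); set y := pdeg (Mg a); move=> *; nlia.
- move: e2 ak; rewrite /L; set x := pdeg (Mg k); set y := pdeg (Mg a); move=> *; nlia.
- by right; exists a.
Qed.

Lemma stepL k : invB k -> Dg k.+1 != 0 ->
  let L := pdeg (Mg k) in
  [/\ Mg k.+1 != 0, pdeg (Mg k.+1) = ((k.+1 - L.*2) + L)%N &
   recip (Mg k.+1) = DlZ Dg (Jg k + 1) *: recip (Mg k)
      - Dg k.+1 *: ('X^(p eps s k) * recip (muZ eps Mg (Jg k)))].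
Proof.
move=> I dk L; have [c0 t0 bN eG jk] := facts _ I.
have [M0 _] := I.
rewrite Mg_S // (negbTE dk) eOfE maxE1 maxE2.
have [h1 [h2 h3]] := gen _ _ (Dg k.+1) _ _ _ _ _ c0 M0 t0 bN eG.
by split.
Qed.

Lemma invBS k : invB k -> invB k.+1.
Proof.
move=> I; have [_ _ _ _ jk] := facts _ I.
case: (eqVneq (Dg k.+1) 0) => dk.
  rewrite /invB Mg_S // Jg_S dk eqxx /=.
  case: I => M0 [[e1 e2]|[a [e1 ak e2 e3]]]; split => //; first by left.
  by right; exists a; split => //; apply: ltnW.
have [M0 dM _] := stepL _ I dk.
split => //; rewrite Jg_S (negbTE dk) /= eOfE le0E dM.
case: I => _ [[e1 e2]|[a [e1 ak e2 e3]]].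
  rewrite e2 /=; right; exists k; split => //.
  by rewrite e2 double0 subn0 !addn0.
case: ifP => h.
  right; exists a; split => //; first by apply: ltnW.
  move: e2 h; set x := pdeg (Mg k); set y := pdeg (Mg a); move=> *; nlia.
right; exists k; split => //.
move: h; set x := pdeg (Mg k); move=> *; nlia.
Qed.

Lemma invBA k : invB k.
Proof. elim: k => [|k IH]; [exact: invB0 | exact: invBS]. Qed.
End Hist.
Arguments Mg {D}. Arguments Dg {D}. Arguments Jg {D}.

Theorem mainTheorem8 (D : idomainType) (n : nat) (eps : D) (s : n.-tuple D) :
  (0 < n)%N -> Delta eps s n != 0 ->
  recip (mu eps s n%:Z)
    = Deltap eps s n *: recip (mu eps s (n.-1)%:Z)
      - Delta eps s n *: ('X^(p eps s n.-1) * recip (mu eps s (jp eps s n.-1)))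
  /\ p eps s n = (if e eps s n.-1 <= 0 then (p eps s n.-1).+1 else 1%N).
Proof.
case: n s => [//|k] s _ dn; rewrite -/(k.+1.-1) [k.+1.-1]/=.
have mE j : mu eps s j = muZ eps (Mg eps s) j by case: j.
have mE2 j : mu eps s (Posz j) = Mg eps s j by [].
have jpE : jp eps s k = Jg eps s k by [].
have DE : Delta eps s k.+1 = Dg eps s k.+1 by [].
have DpE : Deltap eps s k.+1 = DlZ (Dg eps s) (Jg eps s k + 1) by [].
have eE : e eps s k = eOf k (Mg eps s k) by [].
rewrite DE in dn.
have I := @invBA D eps s k.
have [_ _ hr] := @stepL D eps s k I dn.
split; first by rewrite mE2 mE2 jpE mE DE DpE hr.
rewrite pE Jg_S (negbTE dn) /= eE eOfE le0E.
case: ifP => h.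
  case: I => _ [[e1 e2]|[a [e1 ak e2 e3]]].
    by move: h; rewrite e2.
  rewrite e1 pE e1; case: eqP => [k0|_]; first by move: ak; rewrite k0.
  rewrite (subzn (m:=k.+1) (n:=a)); last by apply: leqW; apply: ltnW.
  rewrite (subzn (m:=k) (n:=a)); last by apply: ltnW.
  by rewrite /= subSn // ltnW.
by rewrite (subzn (m:=k.+1) (n:=k)) // subSnn.
Qed.
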